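(* Let $\mathcal{F}=\mathcal{B}(K_3)$. Then $R_3(\mathcal{F},2)=R_3(\mathcal{F},3)=5$, $R_3(\mathcal{F},4)=6$, $R_3(\mathcal{F},5)=7$, $R_3(\mathcal{F},6)=8$, and $R_3(\mathcal{F},8)=9$.
   Context: For a graph $G$, a hypergraph $H$ is a Berge-$G$ hypergraph if there are an injective map $\phi:V(G)\to V(H)$ and pairwise distinct hyperedges $e_{xy}\in E(H)$, one for each $xy\in E(G)$, with $\phi(x),\phi(y)\in e_{xy}$. $\mathcal{B}(G)$ denotes the family of all Berge-$G$ hypergraphs. $K_n^r$ denotes the complete $r$-uniform hypergraph on $n$ vertices. For a family $\mathcal{H}$ of $r$-uniform hypergraphs and integers $k\ge 2$, $r\ge 2$, the Ramsey number $R_r(\mathcal{H},k)$ is the smallest integer $n$ such that every coloring of the hyperedges of $K_n^r$ with $k$ colors contains a monochromatic subhypergraph belonging to $\mathcal{H}$. *)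

(* Defs.v *)
From mathcomp Require Import all_boot.
Set Implicit Arguments. Unset Strict Implicit. Unset Printing Implicit Defensive.

(* A (simple) graph G on a finite vertex type V is given by its edge set:
   a set of 2-element subsets of V.
   A hypergraph H on vertex type W is given by its edge set E : {set {set W}}. *)

Definition is_BergeG (V : finType) (GE : {set {set V}})
  (W : finType) (E : {set {set W}}) : Prop :=
  exists (phi : V -> W) (f : {set V} -> {set W}),
    injective phi /\
    {in GE &, injective f} /\
    (forall xy, xy \in GE -> f xy \in E /\ forall x, x \in xy -> phi x \in f xy).

Definition K3_edges : {set {set 'I_3}} := [set e : {set 'I_3} | #|e| == 2].

Definition complete_hyperedges (n r : nat) : {set {set 'I_n}} :=
  [set e : {set 'I_n} | #|e| == r].

(* A colour class
   (the set of hyperedges of a given colour) contains a subhypergraph in B(G)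
   iff it is itself Berge-G (Berge-G only requires the hyperedges e_xy to be
   among the edges). *)
Definition ramsey_prop (V : finType) (GE : {set {set V}}) (r k n : nat) : Prop :=
  forall c : {set 'I_n} -> 'I_k,
    exists i : 'I_k,
      exists E : {set {set 'I_n}},
        E \subset [set e in complete_hyperedges n r | c e == i] /\
        is_BergeG GE E.

Definition is_ramsey_number (V : finType) (GE : {set {set V}}) (r k N : nat) : Prop :=
  ramsey_prop GE r k N /\ forall m, m < N -> ~ ramsey_prop GE r k m.

(* Main.v *)
Require Import Defs.
From mathcomp Require Import all_boot.
From mathcomp Require Import zify.
From Stdlib Require Import Classical.
Set Implicit Arguments. Unset Strict Implicit. Unset Printing Implicit Defensive.


Definition o0 : 'I_3 := @Ordinal 3 0 isT.
Definition o1 : 'I_3 := @Ordinal 3 1 isT.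
Definition o2 : 'I_3 := @Ordinal 3 2 isT.

Lemma ord3_cases (i : 'I_3) : i = o0 \/ i = o1 \/ i = o2.
Proof.
case: i => [[|[|[|m]]] H].
- by left; apply/val_inj.
- by right; left; apply/val_inj.
- by right; right; apply/val_inj.
- by [].
Qed.

Lemma K3_cases s : s \in K3_edges ->
  s = [set o0; o1] \/ s = [set o1; o2] \/ s = [set o0; o2].
Proof.
rewrite inE => /cards2P [x [y [xy ->]]].
have sC (a b : 'I_3) : [set a; b] = [set b; a] by rewrite setUC.
by case: (ord3_cases x) xy => [->|[->|->]]; case: (ord3_cases y) => [->|[->|->]];
  rewrite ?eqxx // => _; rewrite ?(sC o1 o0) ?(sC o2 o1) ?(sC o2 o0); auto.
Qed.

Lemma K3_in01 : [set o0; o1] \in K3_edges. Proof. by rewrite inE cards2. Qed.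
Lemma K3_in12 : [set o1; o2] \in K3_edges. Proof. by rewrite inE cards2. Qed.
Lemma K3_in02 : [set o0; o2] \in K3_edges. Proof. by rewrite inE cards2. Qed.

Lemma n01_12 : [set o0; o1] != [set o1; o2].
Proof. by apply/eqP => /setP /(_ o0); rewrite !inE. Qed.
Lemma n01_02 : [set o0; o1] != [set o0; o2].
Proof. by apply/eqP => /setP /(_ o1); rewrite !inE. Qed.
Lemma n12_02 : [set o1; o2] != [set o0; o2].
Proof. by apply/eqP => /setP /(_ o1); rewrite !inE. Qed.

Lemma F12_01 : ([set o1; o2] == [set o0; o1]) = false. Proof. by rewrite eq_sym (negbTE n01_12). Qed.
Lemma F02_01 : ([set o0; o2] == [set o0; o1]) = false. Proof. by rewrite eq_sym (negbTE n01_02). Qed.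
Lemma F02_12 : ([set o0; o2] == [set o1; o2]) = false. Proof. by rewrite eq_sym (negbTE n12_02). Qed.

Lemma mk_berge n (E : {set {set 'I_n}}) a b c e1 e2 e3 :
  a != b -> b != c -> a != c -> e1 != e2 -> e2 != e3 -> e1 != e3 ->
  e1 \in E -> e2 \in E -> e3 \in E ->
  a \in e1 -> b \in e1 -> b \in e2 -> c \in e2 -> a \in e3 -> c \in e3 ->
  is_BergeG K3_edges E.
Proof.
move=> ab bc ac e12 e23 e13 E1 E2 E3 a1 b1 b2 c2 a3 c3.
exists (fun i : 'I_3 => if i == o0 then a else if i == o1 then b else c).
exists (fun s => if s == [set o0; o1] then e1 else if s == [set o1; o2] then e2 else e3).
split; [|split].
- move=> i j.
  by case: (ord3_cases i) => [->|[->|->]]; case: (ord3_cases j) => [->|[->|->]] //=;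
    move=> H; move: ab bc ac; rewrite H !eqxx.
- move=> s t /K3_cases Hs /K3_cases Ht.
  have H1 := n01_12; have H2 := n01_02; have H3 := n12_02.
  case: Hs => [->|[->|->]]; case: Ht => [->|[->|->]] //; rewrite ?eqxx ?(negbTE H1) ?(negbTE H2) ?(negbTE H3) ?[_ == [set o0; o1]]eq_sym ?(negbTE H1) ?(negbTE H2) ?[_ == [set o1; o2]]eq_sym ?(negbTE H3) // => H;
  by move: e12 e23 e13; rewrite H !eqxx.
- move=> xy /K3_cases [->|[->|->]].
  + by rewrite eqxx; split=> // x; rewrite !inE => /orP [] /eqP ->.
  + by rewrite F12_01 eqxx; split=> // x; rewrite !inE => /orP [] /eqP ->.
  + rewrite F02_01 F02_12.
    by split=> // x; rewrite !inE => /orP [] /eqP ->.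
Qed.


Definition code n (e : {set 'I_n}) : nat := \sum_(i in e) 2 ^ (val i).

Lemma decomp3 (T : finType) (e : {set T}) a b :
  #|e| = 3 -> a \in e -> b \in e -> a != b ->
  exists x, [/\ x != a, x != b & e = x |: [set a; b]].
Proof.
move=> He ae be ab.
have sub : [set a; b] \subset e by apply/subsetP => y; rewrite !inE => /orP [] /eqP ->.
have : #|e :\: [set a; b]| == 1.
  by rewrite cardsD (setIidPr sub) cards2 ab He.
case/cards1P => x Hx.
have xe : x \in e :\: [set a; b] by rewrite Hx set11.
move: xe; rewrite !inE negb_or => /andP [/andP [xa xb] xe].
exists x; split => //.
apply/setP => y; rewrite !inE.
case: (boolP (y \in [set a; b])) => [|yn].
- by rewrite !inE => /orP [] /eqP ->; rewrite ?ae ?be ?eqxx ?orbT.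
- have : (y \in e :\: [set a; b]) = (y \in e) by rewrite inE yn.
  rewrite Hx inE => <-. move: yn; rewrite !inE negb_or => /andP [/negbTE -> /negbTE ->]; by rewrite !orbF.
Qed.

Definition tc x a b := 2 ^ x + (2 ^ a + 2 ^ b).

Lemma code3 n (x a b : 'I_n) : x != a -> x != b -> a != b ->
  code (x |: [set a; b]) = tc x a b.
Proof.
move=> xa xb ab; rewrite /code big_setU1; last by rewrite !inE negb_or xa xb.
by rewrite big_setU1 ?big_set1 // inE.
Qed.

Definition cl k m := if m < k then m else 0.

Lemma val_inord k m : val (inord m : 'I_k.+1) = cl k.+1 m.
Proof. by rewrite /inord val_insubd. Qed.

Definition badc k (col : nat -> nat) a b c x y z :=
 if (a != b) && (b != c) && (a != c) then
 if (x != a) && (x != b) && (y != b) && (y != c) && (z != a) && (z != c) then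
 if ~~ all (fun t => t \in [:: y; b; c]) [:: x; a; b] then
 if ~~ all (fun t => t \in [:: z; a; c]) [:: y; b; c] then
 if ~~ all (fun t => t \in [:: z; a; c]) [:: x; a; b] then
 if cl k (col (tc x a b)) == cl k (col (tc y b c)) then
  cl k (col (tc y b c)) == cl k (col (tc z a c))
 else false else false else false else false else false else false.

Definition chk n k col := all (fun a => all (fun b => all (fun c => all (fun x =>
  all (fun y => all (fun z => ~~ badc k col a b c x y z) (iota 0 n)) (iota 0 n))
  (iota 0 n)) (iota 0 n)) (iota 0 n)) (iota 0 n).

Lemma sub_helper n (x a b y p q : 'I_n) :
  all (fun t => t \in [:: val y; val p; val q]) [:: val x; val a; val b] ->
  x |: [set a; b] \subset y |: [set p; q].
Proof.
rewrite /= !inE !val_eqE andbT => /and3P [H1 H2 H3].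
by apply/subsetP => t; rewrite !inE => /or3P [] /eqP ->.
Qed.

Lemma ne_helper n (x a b y p q : 'I_n) :
  #|x |: [set a; b]| = 3 -> #|y |: [set p; q]| = 3 ->
  x |: [set a; b] != y |: [set p; q] ->
  ~~ all (fun t => t \in [:: val y; val p; val q]) [:: val x; val a; val b].
Proof.
move=> c1 c2 ne; apply/negP => /sub_helper S.
by move: ne; rewrite eqEcard S c1 c2.
Qed.

Lemma lower n k (col : nat -> nat) : chk n k.+1 col -> ~ ramsey_prop K3_edges 3 k.+1 n.
Proof.
move=> H R.
have [i [E [sub [phi [f [phiI [fI Hf]]]]]]] := R (fun e => inord (col (code e))).
have [E1 H1] := Hf _ K3_in01.
have [E2 H2] := Hf _ K3_in12.
have [E3 H3] := Hf _ K3_in02.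
have a1 := H1 o0 (setU11 _ _). have b1 := H1 o1 (setU1r _ (set11 _)).
have b2 := H2 o1 (setU11 _ _). have c2 := H2 o2 (setU1r _ (set11 _)).
have a3 := H3 o0 (setU11 _ _). have c3 := H3 o2 (setU1r _ (set11 _)).
have ab : phi o0 != phi o1 by apply/negP => /eqP /phiI /(congr1 val).
have bc : phi o1 != phi o2 by apply/negP => /eqP /phiI /(congr1 val).
have ac : phi o0 != phi o2 by apply/negP => /eqP /phiI /(congr1 val).
have e12 : f [set o0; o1] != f [set o1; o2].
  by apply/negP => /eqP /fI => /(_ K3_in01 K3_in12) /eqP; rewrite (negbTE n01_12).
have e23 : f [set o1; o2] != f [set o0; o2].
  by apply/negP => /eqP /fI => /(_ K3_in12 K3_in02) /eqP; rewrite (negbTE n12_02).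
have e13 : f [set o0; o1] != f [set o0; o2].
  by apply/negP => /eqP /fI => /(_ K3_in01 K3_in02) /eqP; rewrite (negbTE n01_02).
move: (subsetP sub _ E1) (subsetP sub _ E2) (subsetP sub _ E3).
rewrite !inE => /andP [/eqP s1 /eqP q1] /andP [/eqP s2 /eqP q2] /andP [/eqP s3 /eqP q3].
have [x [xa xb Ex]] := decomp3 s1 a1 b1 ab.
have [y [yb yc Ey]] := decomp3 s2 b2 c2 bc.
have [z [za zc Ez]] := decomp3 s3 a3 c3 ac.
move: e12 e23 e13 q1 q2 q3 s1 s2 s3; rewrite Ex Ey Ez.
move=> e12 e23 e13 q1 q2 q3 s1 s2 s3.
have Hc1 := congr1 val q1; have Hc2 := congr1 val q2; have Hc3 := congr1 val q3.
rewrite !val_inord !code3 // in Hc1 Hc2 Hc3.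
have B : badc k.+1 col (phi o0) (phi o1) (phi o2) x y z.
  rewrite /badc !val_eqE ab bc ac xa xb yb yc za zc /=.
  rewrite (ne_helper s1 s2 e12) (ne_helper s2 s3 e23) (ne_helper s1 s3 e13).
  by rewrite Hc1 Hc2 Hc3 !eqxx.
have mI (t : 'I_n) : (val t \in iota 0 n) by rewrite mem_iota /= (ltn_ord t).
move: H => /allP /(_ _ (mI (phi o0))) /allP /(_ _ (mI (phi o1))) /allP /(_ _ (mI (phi o2)))
  /allP /(_ _ (mI x)) /allP /(_ _ (mI y)) /allP /(_ _ (mI z)).
by rewrite B.
Qed.


Lemma two_ab a b : 2 * (a * b) <= a * a + b * b.
Proof. have : 0 <= (a - b) * (a - b) + (b - a) * (b - a) by []. nia. Qed.

Section Mantel.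
Variable T : finType.
Variable G : rel T.
Hypothesis Gsym : symmetric G.
Hypothesis Gtri : forall u v w, G u v -> G v w -> G u w -> False.

Let d u := \sum_v (G u v : nat).

Lemma deg_sum u v : G u v -> d u + d v <= #|T|.
Proof.
move=> Huv; rewrite /d -big_split /= -sum1_card.
apply: leq_sum => w _.
case Huw: (G u w); case Hvw: (G v w) => //=.
exfalso; apply: (Gtri Huw _ Huv); by rewrite Gsym.
Qed.

Lemma mantel : 2 * (\sum_u \sum_v (G u v : nat)) <= #|T| ^ 2.
Proof.
set M := \sum_u _.
set S2 := \sum_u d u * d u.
have HM : M = \sum_u d u by [].
have step2 : 2 * S2 <= M * #|T|.
  have -> : 2 * S2 = \sum_u \sum_v (G u v) * (d u + d v).
    rewrite mul2n -addnn {1}/S2.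
    have -> : \sum_u \sum_v (G u v : nat) * (d u + d v)
       = \sum_u \sum_v (G u v : nat) * d u + \sum_u \sum_v (G u v : nat) * d v.
      rewrite -big_split /=; apply: eq_bigr => u _; rewrite -big_split /=.
      by apply: eq_bigr => v _; rewrite mulnDr.
    congr (_ + _).
      by apply: eq_bigr => u _; rewrite -big_distrl.
    rewrite exchange_big /=; apply: eq_bigr => v _; rewrite -big_distrl /=.
    congr (_ * _); apply: eq_bigr => u _; by rewrite Gsym.
  rewrite HM big_distrl /=; apply: leq_sum => u _.
  rewrite /d big_distrl /=; apply: leq_sum => v _.
  case Huv: (G u v); last by [].
  by rewrite !mul1n deg_sum.
have cauchy : M * M <= #|T| * S2.
  rewrite -(leq_pmul2l (isT : 0 < 2)).
  have -> : M * M = \sum_u \sum_v d u * d v.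
    rewrite HM big_distrl /=; apply: eq_bigr => u _; by rewrite big_distrr.
  rewrite big_distrr /=.
  have -> : 2 * (#|T| * S2) = \sum_(u : T) \sum_(v : T) (d u * d u + d v * d v).
    rewrite mul2n -addnn.
    have -> : \sum_(u : T) \sum_(v : T) (d u * d u + d v * d v)
       = \sum_(u : T) \sum_(v : T) d u * d u + \sum_(u : T) \sum_(v : T) d v * d v.
      rewrite -big_split /=; apply: eq_bigr => u _; by rewrite -big_split.
    congr (_ + _).
      rewrite /S2 big_distrr /=; apply: eq_bigr => u _.
      by rewrite sum_nat_const.
    rewrite exchange_big /S2 big_distrr /=; apply: eq_bigr => v _.
    by rewrite sum_nat_const.
  apply: leq_sum => u _; rewrite big_distrr /=; apply: leq_sum => v _.
  exact: two_ab.
have : M * (2 * M) <= M * (#|T| ^ 2).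
  have h2 : #|T| * (2 * S2) <= #|T| * (M * #|T|) by rewrite leq_mul2l step2 orbT.
  move: cauchy h2; set n := #|T|; nia.
case: (posnP M) => [->|Mpos]; first by [].
by rewrite leq_pmul2l.
Qed.
End Mantel.


Lemma card3 (T : finType) (u v w : T) : u != v -> v != w -> u != w -> #|u |: [set v; w]| = 3.
Proof. by move=> uv vw uw; rewrite cardsU1 !inE negb_or uv uw cards2 vw. Qed.

Lemma eq3 (T : finType) (e : {set T}) u v w : #|e| = 3 -> u != v -> v != w -> u != w ->
  u \in e -> v \in e -> w \in e -> e = u |: [set v; w].
Proof.
move=> He uv vw uw ue ve we; apply/eqP; rewrite eq_sym eqEcard card3 // He leqnn andbT.
by apply/subsetP => t; rewrite !inE => /or3P [] /eqP ->.
Qed.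

Section Gyori.
Variable n : nat.
Variable E : {set {set 'I_n}}.
Hypothesis HE3 : forall e, e \in E -> #|e| = 3.
Hypothesis NB : forall a b c e1 e2 e3,
  a != b -> b != c -> a != c -> e1 != e2 -> e2 != e3 -> e1 != e3 ->
  e1 \in E -> e2 \in E -> e3 \in E ->
  a \in e1 -> b \in e1 -> b \in e2 -> c \in e2 -> a \in e3 -> c \in e3 -> False.

Definition priv (e : {set 'I_n}) u v := [forall e' in E, (u \in e') && (v \in e') ==> (e' == e)].
Definition allpriv (e : {set 'I_n}) := [forall u in e, forall v in e, (u != v) ==> priv e u v].
Definition mx (e : {set 'I_n}) := \max_(i in e) val i.
Definition sel (e : {set 'I_n}) (u v : 'I_n) := [&& u != v, u \in e, v \in e, priv e u v &
   allpriv e ==> ((val u == mx e) || (val v == mx e))].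
Definition GG u v := [exists e in E, sel e u v].

Lemma privP e u v e' : priv e u v -> e' \in E -> u \in e' -> v \in e' -> e' = e.
Proof. by move=> /forall_inP H E1 ue ve; apply/eqP; move: (H _ E1); rewrite ue ve. Qed.

Lemma privC e u v : priv e u v = priv e v u.
Proof. by apply: eq_forallb => e'; rewrite andbC. Qed.

Lemma nprivP e u v : ~~ priv e u v -> exists2 e', e' \in E & [/\ u \in e', v \in e' & e' != e].
Proof.
move/forall_inPn => [e' E' H]; exists e' => //.
by move: H; rewrite negb_imply => /andP [/andP [-> ->] ->].
Qed.

Lemma two_nonpriv e u v w : e \in E -> u \in e -> v \in e -> w \in e ->
  u != v -> v != w -> u != w -> ~~ priv e u w -> ~~ priv e v w -> False.
Proof.
move=> Ee ue ve we uv vw uw /nprivP [e1 E1 [u1 w1 n1]] /nprivP [e2 E2 [v2 w2 n2]].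
case: (eqVneq e1 e2) => [E12|E12].
- subst e2.
  have := eq3 (HE3 E1) uv vw uw u1 v2 w1.
  have := eq3 (HE3 Ee) uv vw uw ue ve we.
  by move=> He H1; rewrite H1 -He eqxx in n1.
-
  apply: (NB (a:=u) (b:=w) (c:=v) (e1:=e1) (e2:=e2) (e3:=e)) => //.
  by rewrite eq_sym.
Qed.

Lemma sel_priv e u v e' : sel e u v -> e' \in E -> u \in e' -> v \in e' -> e' = e.
Proof. by move=> /and5P [_ _ _ P _]; apply: privP. Qed.

Lemma selC e u v : sel e u v = sel e v u.
Proof.
rewrite /sel eq_sym privC [(val v == _) || _]orbC.
by case: (u \in e); case: (v \in e).
Qed.

Lemma all3 e x y z : e \in E -> sel e x y -> sel e y z -> sel e x z -> False.
Proof.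
move=> Ee /and5P [xy xe ye pxy Ixy] /and5P [yz _ ze pyz Iyz] /and5P [xz _ _ pxz Ixz].
have AP : allpriv e.
  have He := eq3 (HE3 Ee) xy yz xz xe ye ze.
  apply/forall_inP => u ue; apply/forall_inP => v ve; apply/implyP => uv.
  have mem t : t \in e -> [|| t == x, t == y | t == z] by rewrite {1}He !inE.
  move: (mem _ ue) (mem _ ve) uv.
  case/or3P => /eqP ->; case/or3P => /eqP ->; rewrite ?eqxx // => _.
  all: try done.
  all: try by rewrite privC.
rewrite AP /= in Ixy Iyz Ixz.
have vxy : (nat_of_ord x != nat_of_ord y) := xy.
have vyz : (nat_of_ord y != nat_of_ord z) := yz.
have vxz : (nat_of_ord x != nat_of_ord z) := xz.
move: vxy vyz vxz; case/orP: Ixy => /eqP H1; case/orP: Iyz => /eqP H2; case/orP: Ixz => /eqP H3;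
  move: H1 H2 H3; clear; move: (mx e) => m; lia.
Qed.

Lemma GGsym : symmetric GG.
Proof. by move=> u v; apply: eq_existsb => e; rewrite selC. Qed.

Lemma GGtri u v w : GG u v -> GG v w -> GG u w -> False.
Proof.
move=> /exists_inP [e1 E1 s1] /exists_inP [e2 E2 s2] /exists_inP [e3 E3 s3].
move: (s1) (s2) (s3) => /and5P [uv ue1 ve1 _ _] /and5P [vw ve2 we2 _ _] /and5P [uw ue3 we3 _ _].
case: (eqVneq e1 e2) => [E12|n12].
  subst e2; have E13 := sel_priv s3 E1 ue1 we2; subst e3.
  exact: all3 E1 s1 s2 s3.
case: (eqVneq e2 e3) => [E23|n23].
  subst e3; have E21 := sel_priv s1 E2 ue3 ve2; subst e2.
  exact: all3 E1 s1 s2 s3.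
case: (eqVneq e1 e3) => [E13|n13].
  subst e3; have E12 := sel_priv s2 E1 ve1 we3; subst e2.
  by rewrite eqxx in n12.
exact: (NB uv vw uw n12 n23 n13 E1 E2 E3 ue1 ve1 ve2 we2 ue3 we3).
Qed.


Lemma sum1pt (T : finType) (F : T -> nat) a : F a <= \sum_u F u.
Proof. by rewrite (bigD1 a) //= leq_addr. Qed.

Lemma sum2pt (T : finType) (F : T -> nat) a b : a != b -> F a + F b <= \sum_u F u.
Proof.
move=> ab; rewrite (bigD1 a) //= (bigD1 b) /=; last by rewrite eq_sym.
by rewrite addnA leq_addr.
Qed.

Lemma sum3pt (T : finType) (F : T -> nat) a b c : a != b -> b != c -> a != c ->
  F a + F b + F c <= \sum_u F u.
Proof.
move=> ab bc ac; rewrite (bigD1 a) //= (bigD1 b) /=; last by rewrite eq_sym.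
rewrite (bigD1 c) /=; last by rewrite eq_sym ac eq_sym bc.
by rewrite !addnA leq_addr.
Qed.

Lemma four e a b c : sel e c a -> sel e a c -> sel e c b -> sel e b c ->
  a != b -> b != c -> a != c -> 4 <= \sum_u \sum_v (sel e u v : nat).
Proof.
move=> s1 s2 s3 s4 ab bc ac.
have ca : c != a by rewrite eq_sym.
have cb : c != b by rewrite eq_sym.
apply: leq_trans _ (sum3pt (fun u => \sum_v (sel e u v : nat)) ca ab cb).
have h1 : (sel e c a : nat) + sel e c b <= \sum_v (sel e c v : nat) := sum2pt (fun v => (sel e c v : nat)) ab.
have h2 : (sel e a c : nat) <= \sum_v (sel e a v : nat) := sum1pt (fun v => (sel e a v : nat)) c.
have h3 : (sel e b c : nat) <= \sum_v (sel e b v : nat) := sum1pt (fun v => (sel e b v : nat)) c.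
rewrite s1 s3 in h1; rewrite s2 in h2; rewrite s4 in h3.
rewrite -[4]/(2 + 1 + 1); apply: leq_add => //; exact: leq_add.
Qed.

Lemma selI (e : {set 'I_n}) (u v : 'I_n) : u != v -> u \in e -> v \in e -> priv e u v ->
  (allpriv e -> (val u == mx e) || (val v == mx e)) -> sel e u v.
Proof. by move=> *; apply/and5P; split=> //; apply/implyP. Qed.

Lemma edge_count e : e \in E -> 4 <= \sum_u \sum_v (sel e u v : nat).
Proof.
move=> Ee; have He := HE3 Ee.
case: (boolP (allpriv e)) => AP.
- have pos : 0 < #|e| by rewrite He.
  have [r re Hr] := eq_bigmax_cond (fun i : 'I_n => val i) pos.
  have : #|e :\ r| == 2.
    by move: He; rewrite (cardsD1 r e) re add1n => -[->].
  case/cards2P => p [q [pq Hpq]].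
  have : p \in e :\ r by rewrite Hpq !inE eqxx.
  have : q \in e :\ r by rewrite Hpq !inE eqxx orbT.
  rewrite !inE => /andP [qr qe] /andP [pr pe].
  have Pr u v : u \in e -> v \in e -> u != v -> priv e u v.
    by move=> ue ve uv; move/forall_inP: AP => /(_ u ue) /forall_inP /(_ v ve) /implyP; apply.
  have mxr : mx e = val r by rewrite /mx Hr.
  have rp : r != p by rewrite eq_sym.
  have rq : r != q by rewrite eq_sym.
  apply: (@four e p q r) => //.
  + by apply: selI => //; [apply: Pr | rewrite mxr eqxx].
  + by apply: selI => //; [apply: Pr | rewrite mxr eqxx orbT].
  + by apply: selI => //; [apply: Pr | rewrite mxr eqxx].
  + by apply: selI => //; [apply: Pr | rewrite mxr eqxx orbT].
- move: AP; rewrite /allpriv negb_forall_in => /exists_inP [u0 u0e].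
  rewrite negb_forall_in => /exists_inP [v0 v0e]; rewrite negb_imply => /andP [uv npr].
  have [w [wu wv Hw]] := decomp3 He u0e v0e uv.
  have we : w \in e by rewrite Hw setU11.
  have p1 : priv e w u0.
    apply/negPn/negP => np.
    apply: (@two_nonpriv e w v0 u0 Ee we v0e u0e wv _ wu _ _).
    - by rewrite eq_sym.
    - exact: np.
    - by rewrite privC.
  have p2 : priv e w v0.
    apply/negPn/negP => np.
    exact: (@two_nonpriv e w u0 v0 Ee we u0e v0e wu uv wv np npr).
  have nAP : ~ allpriv e.
    move=> /forall_inP /(_ u0 u0e) /forall_inP /(_ v0 v0e) /implyP /(_ uv).
    by move/negP: npr.
  apply: (@four e u0 v0 w) => //.
  + by apply: (selI wu we u0e p1) => /nAP.
  + apply: (selI _ u0e we) => //; first by rewrite eq_sym.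
    by rewrite privC.
  + by apply: (selI wv we v0e p2) => /nAP.
  + apply: (selI _ v0e we) => //; first by rewrite eq_sym.
    by rewrite privC.
  + by rewrite eq_sym.
  + by rewrite eq_sym.
Qed.

Lemma sum_sel_le u v : \sum_(e in E) (sel e u v : nat) <= GG u v.
Proof.
case: (boolP (GG u v)) => [/exists_inP [e0 E0 s0]|nG].
- rewrite (bigD1 e0) //= s0 big1 // => e /andP [Ee ne].
  apply/eqP; rewrite eqb0; apply/negP => se.
  move: (se) => /and5P [_ ue ve _ _].
  by have := sel_priv s0 Ee ue ve; move/eqP; rewrite (negbTE ne).
- rewrite big1 // => e Ee; apply/eqP; rewrite eqb0; apply/negP => se.
  by move/negP: nG; apply; apply/exists_inP; exists e.
Qed.

Lemma gyori_bound : 8 * #|E| <= n ^ 2.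
Proof.
have H1 : 4 * #|E| <= \sum_u \sum_v (GG u v : nat).
  rewrite mulnC -sum_nat_const.
  apply: (@leq_trans (\sum_(e in E) \sum_u \sum_v (sel e u v : nat))).
    by apply: leq_sum => e Ee; apply: edge_count.
  rewrite exchange_big /=; apply: leq_sum => u _.
  rewrite exchange_big /=; apply: leq_sum => v _.
  exact: sum_sel_le.
have H2 := mantel GGsym GGtri.
rewrite card_ord in H2.
rewrite -[8]/(2 * 4) -mulnA; apply: leq_trans _ H2.
by rewrite leq_mul2l H1 orbT.
Qed.

End Gyori.

Definition tbl4_2 := [:: 0; 0; 0; 0; 0; 0; 0; 0; 0; 0; 0; 1; 0; 0; 1; 0].
Definition tbl5_4 := [:: 0; 0; 0; 0; 0; 0; 0; 1; 0; 0; 0; 3; 0; 3; 1; 0; 0; 0; 0; 0; 0; 0; 1; 0; 0; 2; 2; 0; 2; 0; 0; 0].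
Definition tbl6_5 := [:: 0; 0; 0; 0; 0; 0; 0; 2; 0; 0; 0; 1; 0; 3; 1; 0; 0; 0; 0; 2; 0; 0; 4; 0; 0; 0; 3; 0; 4; 0; 0; 0; 0; 0; 0; 4; 0; 3; 0; 0; 0; 4; 0; 0; 2; 0; 0; 0; 0; 1; 3; 0; 1; 0; 0; 0; 2; 0; 0; 0; 0; 0; 0; 0].
Definition tbl7_6 := [:: 0; 0; 0; 0; 0; 0; 0; 1; 0; 0; 0; 4; 0; 0; 4; 0; 0; 0; 0; 2; 0; 2; 5; 0; 0; 0; 5; 0; 1; 0; 0; 0; 0; 0; 0; 1; 0; 3; 3; 0; 0; 0; 4; 0; 3; 0; 0; 0; 0; 2; 5; 0; 3; 0; 0; 0; 1; 0; 0; 0; 0; 0; 0; 0; 0; 0; 0; 1; 0; 5; 0; 0; 0; 5; 2; 0; 2; 0; 0; 0; 0; 4; 0; 0; 4; 0; 0; 0; 1; 0; 0; 0; 0; 0; 0; 0; 0; 5; 0; 0; 3; 0; 0; 0; 2; 0; 0; 0; 0; 0; 0; 0; 4; 0; 0; 0; 0; 0; 0; 0; 0; 0; 0; 0; 0; 0; 0; 0].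
Definition tbl8_8 := [:: 0; 0; 0; 0; 0; 0; 0; 6; 0; 0; 0; 7; 0; 2; 6; 0; 0; 0; 0; 7; 0; 5; 6; 0; 0; 5; 0; 0; 2; 0; 0; 0; 0; 0; 0; 7; 0; 4; 4; 0; 0; 3; 3; 0; 3; 0; 0; 0; 0; 5; 2; 0; 4; 0; 0; 0; 0; 0; 0; 0; 0; 0; 0; 0; 0; 0; 0; 0; 0; 0; 6; 0; 0; 4; 4; 0; 7; 0; 0; 0; 0; 5; 1; 0; 7; 0; 0; 0; 4; 0; 0; 0; 0; 0; 0; 0; 0; 0; 1; 0; 7; 0; 0; 0; 3; 0; 0; 0; 0; 0; 0; 0; 2; 0; 0; 0; 0; 0; 0; 0; 0; 0; 0; 0; 0; 0; 0; 0; 0; 0; 0; 7; 0; 1; 5; 0; 0; 1; 5; 0; 2; 0; 0; 0; 0; 3; 3; 0; 3; 0; 0; 0; 0; 0; 0; 0; 0; 0; 0; 0; 0; 6; 5; 0; 4; 0; 0; 0; 6; 0; 0; 0; 0; 0; 0; 0; 6; 0; 0; 0; 0; 0; 0; 0; 0; 0; 0; 0; 0; 0; 0; 0; 0; 0; 5; 0; 7; 0; 0; 0; 4; 0; 0; 0; 0; 0; 0; 0; 3; 0; 0; 0; 0; 0; 0; 0; 0; 0; 0; 0; 0; 0; 0; 0; 6; 0; 0; 0; 0; 0; 0; 0; 0; 0; 0; 0; 0; 0; 0; 0; 0; 0; 0; 0; 0; 0; 0; 0; 0; 0; 0; 0; 0; 0; 0; 0].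

Definition colf (t : seq nat) (m : nat) := nth 0 t m.

Lemma class_card N k (c : {set 'I_N} -> 'I_k) (A : {set {set 'I_N}}) :
  #|A| = \sum_(i < k) #|[set e in A | c e == i]|.
Proof.
rewrite -sum1_card (partition_big c predT) //=.
apply: eq_bigr => i _; rewrite -sum1_card; apply: eq_bigl => e.
by rewrite !inE.
Qed.

Lemma upper N k : k * N ^ 2 < 8 * 'C(N, 3) -> ramsey_prop K3_edges 3 k N.
Proof.
move=> Hlt c; apply: NNPP => Hn.
have Hb (i : 'I_k) : 8 * #|[set e in complete_hyperedges N 3 | c e == i]| <= N ^ 2.
  apply: gyori_bound.
  - by move=> e; rewrite !inE => /andP [/eqP].
  - move=> a b cc e1 e2 e3 ab bc ac e12 e23 e13 E1 E2 E3 a1 b1 b2 c2 a3 c3.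
    apply: Hn; exists i, [set e in complete_hyperedges N 3 | c e == i]; split => //.
    exact: (mk_berge ab bc ac e12 e23 e13 E1 E2 E3 a1 b1 b2 c2 a3 c3).
have HC : #|complete_hyperedges N 3| = 'C(N, 3).
  by rewrite /complete_hyperedges card_draws card_ord.
have : 8 * 'C(N, 3) <= k * N ^ 2.
  rewrite -HC (class_card c) big_distrr /=.
  apply: (@leq_trans (\sum_(i < k) N ^ 2)).
    by apply: leq_sum => i _; apply: Hb.
  by rewrite sum_nat_const card_ord.
by rewrite leqNgt Hlt.
Qed.

Lemma lowerN N k col : all (fun m => chk m k.+1 col) (iota 0 N) ->
  forall m, m < N -> ~ ramsey_prop K3_edges 3 k.+1 m.
Proof.
move=> /allP H m mN; apply: (@lower m k col); apply: H.
by rewrite mem_iota.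
Qed.

Theorem theorem1 :
  is_ramsey_number K3_edges 3 2 5 /\
  is_ramsey_number K3_edges 3 3 5 /\
  is_ramsey_number K3_edges 3 4 6 /\
  is_ramsey_number K3_edges 3 5 7 /\
  is_ramsey_number K3_edges 3 6 8 /\
  is_ramsey_number K3_edges 3 8 9.
Proof.
split; [|split; [|split; [|split; [|split]]]].
- split; first by apply: upper.
  by apply: (@lowerN 5 1 (colf tbl4_2)); vm_compute; reflexivity.
- split; first by apply: upper.
  by apply: (@lowerN 5 2 (colf tbl4_2)); vm_compute; reflexivity.
- split; first by apply: upper.
  by apply: (@lowerN 6 3 (colf tbl5_4)); vm_compute; reflexivity.
- split; first by apply: upper.
  by apply: (@lowerN 7 4 (colf tbl6_5)); vm_compute; reflexivity.
- split; first by apply: upper.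
  by apply: (@lowerN 8 5 (colf tbl7_6)); vm_compute; reflexivity.
- split; first by apply: upper.
  by apply: (@lowerN 9 7 (colf tbl8_8)); vm_compute; reflexivity.
Qed.
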